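(* Let $d\geq 2$, $a\in[1/2,1]$, $\kappa\in[1/4,3/4]$ and $\delta>0$. Define for $k\in\mathbb{N}$ the points $x^{k,\delta}\in\mathbb{R}^{d}$ by $x^{k,\delta}=(a(k+1-\kappa)^{-1},0,\dots,0)$ if $k$ is odd and $x^{k,\delta}=(a(k+1-\kappa)^{-1},\delta,0,\dots,0)$ if $k$ is even, and let $f_a:\mathbb{R}^{d}\to\{0,1\}$ be $f_a(x)=1$ if $\lceil a/x_1\rceil$ is an odd integer and $f_a(x)=0$ otherwise. Fix neural network dimensions $\mathbf{N}=(N_L=1,N_{L-1},\dots,N_1,N_0=d)$ with $L\geq 2$. Then there exists $\tilde\varphi\in\mathcal{NN}_{\mathbf{N},L}$ with $\tilde\varphi(x^{k,\delta})=f_a(x^{k,\delta})$ for all $k\in\mathbb{N}$.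
   Context: $\mathcal{NN}_{\mathbf{N},L}$ is the set of maps $\varphi=W^L\rho W^{L-1}\rho\cdots\rho W^1:\mathbb{R}^d\to\mathbb{R}$ where each $W^\ell:\mathbb{R}^{N_{\ell-1}}\to\mathbb{R}^{N_\ell}$ is affine and $\rho(t)=\max\{0,t\}$ is applied coordinatewise. *)

(* Defs.v *)
From HB Require Import structures.
From mathcomp Require Import all_boot all_order all_algebra.
From mathcomp Require Import reals.
Set Implicit Arguments. Unset Strict Implicit. Unset Printing Implicit Defensive.
Import Order.TTheory GRing.Theory Num.Theory.
Local Open Scope ring_scope.

Section NN.
Variable R : realType.

Definition relu (t : R) : R := Num.max 0 t.

(* a vector x in R^d seen as a nat-indexed family (zero outside 0..d-1) *)
Definition vfun (d : nat) (x : 'rV[R]_d) (j : nat) : R :=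
  odflt 0 (omap (fun k : 'I_d => x ord0 k) (insub j)).

(* Layer l (1 <= l <= L) is the affine
   map W^l : R^(N (l-1)) -> R^(N l),
     (W^l z)_i = \sum_(j < N (l-1)) A l i j * z_j + b l i   (i < N l).
   layer_out N A b L l x = output of the l-th layer (after ReLU for l < L). *)
Fixpoint layer_out (N : nat -> nat) (A : nat -> nat -> nat -> R)
  (b : nat -> nat -> R) (L : nat) (l : nat) (x : nat -> R) : nat -> R :=
  match l with
  | 0 => x
  | l'.+1 =>
      let z := layer_out N A b L l' x in
      let y := fun i => \sum_(j < N l') A l i j * z j + b l i in
      if l == L then y else (fun i => relu (y i))
  end.

(* realization W^L rho W^(L-1) rho ... rho W^1 : R^d -> R, d = N 0 *)
Definition realize (d : nat) (N : nat -> nat) (A : nat -> nat -> nat -> R)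
  (b : nat -> nat -> R) (L : nat) : 'rV[R]_d -> R :=
  fun x => layer_out N A b L L (vfun x) 0.

Definition in_NN (d : nat) (N : nat -> nat) (L : nat) (phi : 'rV[R]_d -> R) : Prop :=
  exists (A : nat -> nat -> nat -> R) (b : nat -> nat -> R),
    forall x, phi x = realize N A b L x.

Definition xpt (d : nat) (a kappa delta : R) (k : nat) : 'rV[R]_d :=
  \row_(i < d) (if (i == 0 :> nat) then a / (k.+1%:R - kappa)
                else if (i == 1 :> nat) && ~~ odd k then delta else 0).

Definition fa (d : nat) (a : R) (x : 'rV[R]_d) : R :=
  if odd `|Num.ceil (a / vfun x 0)|%N then 1 else 0.

End NN.

(* Main.v *)
Require Import Defs.
From HB Require Import structures.
From mathcomp Require Import all_boot all_order all_algebra.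
From mathcomp Require Import reals.
From mathcomp Require Import lra.
Import Order.TTheory GRing.Theory Num.Theory.
Local Open Scope ring_scope.

Lemma sum_sel (R : realType) n c (Hc : (c < n)%N) (v : R) (z : nat -> R) :
  \sum_(j < n) (if (j : nat) == c then v else 0) * z j = v * z c.
Proof.
rewrite (bigD1 (Ordinal Hc)) //= eqxx big1 ?addr0 // => j hj.
case: eqP => [e|]; last by rewrite mul0r.
by exfalso; move/eqP: hj; apply; apply: val_inj.
Qed.

Theorem lemma5p3 (R : realType) (d : nat) (a kappa delta : R)
  (N : nat -> nat) (L : nat) :
  (2 <= d)%N ->
  1/2 <= a <= 1 ->
  1/4 <= kappa <= 3/4 ->
  0 < delta ->
  (2 <= L)%N ->
  N 0%N = d -> N L = 1%N -> (forall l, (l <= L)%N -> (0 < N l)%N) ->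
  exists phi : 'rV[R]_d -> R,
    in_NN N L phi /\
    forall k : nat, phi (xpt d a kappa delta k) = fa a (xpt d a kappa delta k).
Proof.
move=> hd /andP[ha1 ha2] /andP[hk1 hk2] hdel hL hN0 hNL hNp.
pose A : nat -> nat -> nat -> R := fun l i j =>
  if (i == 0%N) && (j == (if l == 1%N then 1%N else 0%N)) then
    (if l == L then delta^-1 else 1) else 0.
pose b : nat -> nat -> R := fun _ _ => 0.
exists (realize N A b L); split; first by exists A, b.
have inner : forall x l, (1 <= l < L)%N ->
    layer_out N A b L l x 0%N = relu (x 1%N).
  move=> x; elim=> [//|l IH] /andP[h1 h2].
  rewrite /= (ltn_eqF h2) /b addr0.
  have -> : \sum_(j < N l) A l.+1 0%N j * layer_out N A b L l x j =
            \sum_(j < N l) (if (j:nat) == (if l.+1 == 1%N then 1%N else 0%N)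
               then 1 else 0) * layer_out N A b L l x j.
    apply: eq_bigr => j _; rewrite /A /= (ltn_eqF h2); done.
  case: l IH h1 h2 => [|l] IH h1 h2.
    rewrite /= sum_sel; first by rewrite mul1r.
    by move: hd; rewrite -hN0.
  have -> : (if l.+2 == 1%N then 1%N else 0%N) = 0%N by [].
  rewrite sum_sel; last by apply: hNp; apply: ltnW; apply: ltnW.
  rewrite mul1r.
  rewrite IH; last by rewrite /= ltnW.
  by rewrite /relu maxA maxxx.
move=> k.
have x1 : vfun (xpt d a kappa delta k) 1%N = if odd k then 0 else delta.
  rewrite /vfun (insubT (fun j => j < d)%N hd) /= /xpt mxE /=.
  by case: (odd k).
have x0 : vfun (xpt d a kappa delta k) 0%N = a / (k.+1%:R - kappa).
  rewrite /vfun (insubT (fun j => j < d)%N (ltnW hd)) /= /xpt mxE /=.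
  done.
rewrite /realize /fa x0.
have kp : 0 < k.+1%:R - kappa :> R.
  have : 1 <= k.+1%:R :> R by rewrite ler1n.
  lra.
have a0 : a != 0 by apply/eqP; lra.
have -> : a / (a / (k.+1%:R - kappa)) = k.+1%:R - kappa.
  by rewrite invf_div mulrA mulrC mulrA mulVf ?mul1r.
have -> : Num.ceil (k.+1%:R - kappa) = (k.+1)%:Z.
  apply: ceil_def. have e : forall n : nat, (n%:Z)%:~R = n%:R :> R by []. rewrite rmorphB /= !e; apply/andP; split; lra.
have HL : L = (L.-1).+1 by rewrite prednK // ltnW.
rewrite HL /= -HL eqxx /b addr0.
have -> : \sum_(j < N L.-1) A L 0%N j * layer_out N A b L L.-1
      (vfun (xpt d a kappa delta k)) j =
   \sum_(j < N L.-1) (if (j:nat) == 0%N then delta^-1 else 0) * layer_out N A b L L.-1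
      (vfun (xpt d a kappa delta k)) j.
  apply: eq_bigr => j _; rewrite /A /= eqxx /=.
  have -> : (L == 1%N) = false by apply/eqP => e; rewrite e in hL.
  done.
rewrite sum_sel; last by apply: hNp; rewrite leq_pred.
rewrite inner; last by apply/andP; split; [rewrite -ltnS -HL | rewrite ltn_predL ltnW].
rewrite x1 /=.
case: (odd k) => /=; rewrite /relu.
  by rewrite maxxx mulr0.
by rewrite max_r ?ltW // mulVf // gt_eqF.
Qed.
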